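(* Let $\mathcal{D}$ be a finite nonempty set of disks in the plane with positive radii, and let $\delta^*$ be the minimum value $\delta\ge0$ for which there exist two points $p_1,p_2\in\mathbb{R}^2$ with $D(\delta)\cap\{p_1,p_2\}\neq\emptyset$ for every $D\in\mathcal{D}$. Let $p_1,p_2$ be two points with $D(\delta^* )\cap\{p_1,p_2\}\neq\emptyset$ for every $D\in\mathcal{D}$. Then $\delta^*=0$, or one of $p_1,p_2$ is a common boundary point of three $\delta^*$-inflated disks $D(\delta^* )$, $D\in\mathcal{D}$, or one of $p_1,p_2$ is a tangent point of two $\delta^*$-inflated disks.
   Context: For a disk $D$ with center $c(D)$ and radius $r(D)$ and a real $\delta\ge0$, the $\delta$-inflated disk $D(\delta)$ is the closed disk with center $c(D)$ and radius $r(D)+\delta$. A tangent point of two disks is a point where their boundary circles touch (the disks intersect in exactly that point). The paper assumes throughout that no disk of $\mathcal{D}$ contains another disk of $\mathcal{D}$. *)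

(* Defs.v *)
From mathcomp Require Import all_boot all_order all_algebra.
From mathcomp Require Import reals.
Set Implicit Arguments. Unset Strict Implicit. Unset Printing Implicit Defensive.
Import Order.TTheory GRing.Theory Num.Theory.
Local Open Scope ring_scope.

Section Disks.
Variable R : realType.

Definition point := (R * R)%type.
Definition disk := (point * R)%type.
Definition center (D : disk) : point := D.1.
Definition radius (D : disk) : R := D.2.

Definition dist (p q : point) : R :=
  Num.sqrt ((p.1 - q.1) ^+ 2 + (p.2 - q.2) ^+ 2).

Definition in_inflated (D : disk) (delta : R) (p : point) : Prop :=
  dist p (center D) <= radius D + delta.

Definition on_boundary (D : disk) (delta : R) (p : point) : Prop :=
  dist p (center D) = radius D + delta.

Definition covers (Ds : seq disk) (delta : R) (p1 p2 : point) : Prop :=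
  forall D, D \in Ds -> in_inflated D delta p1 \/ in_inflated D delta p2.

Definition disk_contains (D1 D2 : disk) : Prop :=
  forall p, in_inflated D2 0 p -> in_inflated D1 0 p.

Definition common_boundary3 (Ds : seq disk) (delta : R) (p : point) : Prop :=
  exists D1 D2 D3, [/\ D1 \in Ds, D2 \in Ds, D3 \in Ds,
    [/\ D1 != D2, D1 != D3 & D2 != D3] &
    [/\ on_boundary D1 delta p, on_boundary D2 delta p & on_boundary D3 delta p]].

Definition tangent_point (Ds : seq disk) (delta : R) (p : point) : Prop :=
  exists D1 D2, [/\ D1 \in Ds, D2 \in Ds, D1 != D2 &
    forall q, (in_inflated D1 delta q /\ in_inflated D2 delta q) <-> q = p].

End Disks.

(* Main.v *)
Require Import Defs.
From mathcomp Require Import all_boot all_order all_algebra.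
From mathcomp Require Import reals.
From mathcomp Require Import ring lra.
From Stdlib Require Import Classical.
Import Order.TTheory GRing.Theory Num.Theory.
Local Open Scope ring_scope.

Section H.
Variable R : realType.
Implicit Types p q c : point R.

Definition sq p c : R := (p.1 - c.1) ^+ 2 + (p.2 - c.2) ^+ 2.

Lemma sq_ge0 p c : 0 <= sq p c.
Proof. by rewrite /sq addr_ge0 // sqr_ge0. Qed.

Lemma dist_le p c r : 0 <= r -> (dist p c <= r) = (sq p c <= r ^+ 2).
Proof.
move=> r0; rewrite /dist -{1}(ger0_norm r0) -sqrtr_sqr ler_sqrt //.
exact: sqr_ge0.
Qed.

Lemma dist_lt p c r : 0 < r -> (dist p c < r) = (sq p c < r ^+ 2).
Proof.
move=> r0; rewrite /dist -{1}(gtr0_norm r0) -sqrtr_sqr ltr_sqrt //.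
by rewrite exprn_gt0.
Qed.

Definition lerp p q (s : R) : point R :=
  (p.1 + s * (q.1 - p.1), p.2 + s * (q.2 - p.2)).

Lemma lerp_comp p q s t : lerp p (lerp p q s) t = lerp p q (s * t).
Proof. by rewrite /lerp /=; congr pair; ring. Qed.

Lemma sq_pos p q : p != q -> 0 < sq p q.
Proof.
move=> npq; rewrite lt_neqAle sq_ge0 andbT eq_sym.
apply/negP => /eqP; rewrite /sq => /eqP.
rewrite paddr_eq0 ?sqr_ge0 // !sqrf_eq0 !subr_eq0 => /andP[/eqP h1 /eqP h2].
by move: npq; case: p q h1 h2 => [? ?] [? ?] /= -> ->; rewrite eqxx.
Qed.

Lemma conv D (d : R) p q s : 0 <= radius D + d ->
  in_inflated D d p -> in_inflated D d q -> 0 <= s <= 1 ->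
  in_inflated D d (lerp p q s).
Proof.
move=> r0; rewrite /in_inflated !dist_le // => hp hq /andP[s0 s1].
have E : sq (lerp p q s) (center D) = (1 - s) * sq p (center D) + s * sq q (center D)
   - s * (1 - s) * sq q p by rewrite /sq /lerp /=; ring.
rewrite E.
have := sq_ge0 q p; set X := sq q p; set A := sq p _; set B := sq q _.
move: hp hq; rewrite -/A -/B => hp hq hX.
set r2 := (radius D + d) ^+ 2 in hp hq *.
have h1 : 0 <= s * (1 - s) * X by rewrite mulr_ge0 // mulr_ge0 // subr_ge0.
have h2 : (1 - s) * A <= (1 - s) * r2 by rewrite ler_wpM2l // subr_ge0.
have h3 : s * B <= s * r2 by rewrite ler_wpM2l.
lra.
Qed.

Lemma strict_step D (d : R) p q : 0 < radius D + d ->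
  dist p (center D) < radius D + d ->
  exists s, 0 < s <= 1 /\ in_inflated D d (lerp p q s).
Proof.
move=> r0; rewrite /in_inflated dist_lt // => hp.
set c := center D.
set a1 := p.1 - c.1; set a2 := p.2 - c.2; set v1 := q.1 - p.1; set v2 := q.2 - p.2.
set A := a1 ^+ 2 + a2 ^+ 2; set V := v1 ^+ 2 + v2 ^+ 2.
set g := (radius D + d) ^+ 2 - A.
have g0 : 0 < g by rewrite subr_gt0.
set K := A + 2 * V + 1.
have V0 : 0 <= V by rewrite addr_ge0 // sqr_ge0.
have A0 : 0 <= A by rewrite addr_ge0 // sqr_ge0.
have K0 : 0 < K by rewrite /K; lra.
have gK0 : 0 < g + K by rewrite addr_gt0.
exists (g / (g + K)).
have s0 : 0 < g / (g + K) by rewrite divr_gt0.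
have sE : g / (g + K) * (g + K) = g by rewrite divfK // gt_eqF.
set s := g / (g + K) in s0 sE *.
have s1 : s <= 1 by nra.
split; first by rewrite s0 s1.
rewrite dist_le; last exact: ltW.
have E : sq (lerp p q s) c = A + 2 * s * (a1 * v1 + a2 * v2) + s ^+ 2 * V.
  by rewrite /sq /lerp /A /V /a1 /a2 /v1 /v2 /=; ring.
rewrite E.
have hav : 2 * (a1 * v1 + a2 * v2) <= A + V.
  have : 0 <= (a1 - v1) ^+ 2 + (a2 - v2) ^+ 2 by rewrite addr_ge0 // sqr_ge0.
  rewrite /A /V; lra.
have hs2 : s ^+ 2 * V <= s * V.
  have s1' : 0 <= 1 - s by rewrite subr_ge0.
  have := mulr_ge0 (mulr_ge0 (ltW s0) s1') V0.
  rewrite expr2; lra.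
have h1 : s * (2 * (a1 * v1 + a2 * v2)) <= s * (A + V) by rewrite ler_wpM2l // ltW.
have : s * K < g.
  rewrite -[X in _ < X]sE ltr_pM2l // ltrDr //.
rewrite /K /g; nra.
Qed.


Lemma mono D (d1 d2 : R) x : in_inflated D d1 x -> d1 <= d2 -> in_inflated D d2 x.
Proof. rewrite /in_inflated => h h12; apply: (le_trans h); by rewrite lerD2l. Qed.

Lemma ext (d : R) p q (S : seq (disk R)) : q != p ->
  (forall D, D \in S -> 0 < radius D + d) ->
  (forall D, D \in S -> in_inflated D d p) ->
  (forall D, D \in S -> in_inflated D d q \/ dist p (center D) < radius D + d) ->
  exists s, 0 < s <= 1 /\ forall D, D \in S -> in_inflated D d (lerp p q s).
Proof.
move=> nqp; elim: S => [|D S IH] hr hp hq.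
  by exists 1; split => //; rewrite ltr01 lexx.
have [|||s [/andP[s0 s1] hs]] := IH.
- by move=> D' h; apply: hr; rewrite inE h orbT.
- by move=> D' h; apply: hp; rewrite inE h orbT.
- by move=> D' h; apply: hq; rewrite inE h orbT.
have hrD := hr D (mem_head _ _).
case: (hq D (mem_head _ _)) => [hqD | hst].
  exists s; split; first by rewrite s0 s1.
  move=> D'; rewrite inE => /orP[/eqP -> | hD']; last exact: hs.
  apply: conv => //; [exact: ltW | exact: hp (mem_head _ _) | by rewrite (ltW s0) s1].
have [t [/andP[t0 t1] ht]] := @strict_step D d p (lerp p q s) hrD hst.
exists (s * t); split.
  by rewrite mulr_gt0 // mulr_ile1 // ltW.
rewrite -lerp_comp => D'; rewrite inE => /orP[/eqP -> // | hD'].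
have hD'' : D' \in D :: S by rewrite inE hD' orbT.
apply: conv; [exact: ltW (hr _ hD'') | exact: hp hD'' | exact: hs hD' | by rewrite (ltW t0) t1].
Qed.

Lemma mid (d b : R) p q (S : seq (disk R)) : p != q ->
  (forall D, D \in S -> 0 < radius D + d) ->
  (forall D, D \in S -> in_inflated D d p /\ in_inflated D d q) -> 0 < b ->
  exists e, 0 < e <= b /\
    forall D, D \in S -> in_inflated D (d - e) (lerp p q (2^-1)).
Proof.
move=> npq; elim: S => [|D S IH] hr hpq b0.
  by exists b; split => //; rewrite b0 lexx.
have [|||e [/andP[e0 eb] he]] := IH.
- by move=> D' h; apply: hr; rewrite inE h orbT.
- by move=> D' h; apply: hpq; rewrite inE h orbT.
- exact: b0.
have hrD := hr D (mem_head _ _).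
have [hp hq] := hpq D (mem_head _ _).
set m := lerp p q (2^-1).
have hm : dist m (center D) < radius D + d.
  have r0 := ltW hrD.
  move: hp hq; rewrite /in_inflated (dist_le _ _ _ r0) (dist_le _ _ _ r0) dist_lt //.
  have E : sq m (center D) = 2^-1 * sq p (center D) + 2^-1 * sq q (center D)
     - 4^-1 * sq p q.
    by rewrite /sq /m /lerp /=; field.
  rewrite E => h1 h2.
  have h3 := sq_pos _ _ npq.
  lra.
set eD := radius D + d - dist m (center D).
have eD0 : 0 < eD by rewrite subr_gt0.
exists (Num.min e eD); split.
  by rewrite lt_min e0 eD0 ge_min eb.
move=> D'; rewrite inE => /orP[/eqP -> | hD'].
  rewrite /in_inflated.
  have : Num.min e eD <= eD by rewrite ge_min lexx orbT.
  rewrite /eD; set mm := Num.min _ _; lra.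
apply: mono (he D' hD') _; rewrite lerD2l lerN2 ge_min lexx //.
Qed.


Lemma lerp_neq p q s : q != p -> 0 < s -> lerp p q s != p.
Proof.
move=> nqp s0; apply: contra nqp; case: p q => [a b] [c e].
rewrite /lerp /= xpair_eqE => /andP[/eqP h1 /eqP h2].
have h1' : s * (c - a) = 0 by lra.
have h2' : s * (e - b) = 0 by lra.
move: h1' h2' => /eqP; rewrite mulf_eq0 gt_eqF //= subr_eq0 => /eqP ->.
by move=> /eqP; rewrite mulf_eq0 gt_eqF //= subr_eq0 => /eqP ->.
Qed.

Lemma key (d : R) (Ds : seq (disk R)) p : uniq Ds ->
  (forall D, D \in Ds -> 0 < radius D + d) ->
  ~ common_boundary3 Ds d p -> ~ tangent_point Ds d p ->
  exists q, q != p /\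
    forall D, D \in Ds -> in_inflated D d p -> in_inflated D d q.
Proof.
move=> uDs hr ncb ntp.
suff [q0 [nq0 h0]] : exists q0, q0 != p /\ forall D, D \in Ds ->
    in_inflated D d p -> in_inflated D d q0 \/ dist p (center D) < radius D + d.
  set S := [seq D <- Ds | dist p (center D) <= radius D + d].
  have [|||s [/andP[s0 s1] hs]] := @ext d p q0 S nq0.
  - by move=> D; rewrite mem_filter => /andP[_ /hr].
  - by move=> D; rewrite mem_filter => /andP[].
  - by move=> D; rewrite mem_filter => /andP[h1 h2]; apply: h0.
  exists (lerp p q0 s); split; first exact: lerp_neq.
  by move=> D hD hp; apply: hs; rewrite mem_filter hD andbT.
set A := [seq D <- Ds | dist p (center D) == radius D + d].
have uA : uniq A by exact: filter_uniq.
have memA : forall D, D \in Ds -> in_inflated D d p ->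
    D \in A \/ dist p (center D) < radius D + d.
  move=> D hD hp; rewrite mem_filter hD andbT.
  by case: eqP => [_|hne]; [left | right; rewrite lt_neqAle hp andbT; apply/eqP].
have inA : forall D, D \in A -> D \in Ds /\ on_boundary D d p.
  by move=> D; rewrite mem_filter => /andP[/eqP ? ?].
move: uA memA inA; case: A => [|D1 [|D2 [|D3 A']]] uA memA inA.
- exists (p.1 + 1, p.2); split.
    by case: p {memA inA ncb ntp} => a b; rewrite xpair_eqE /= -subr_eq0 addrC addKr oner_eq0.
  by move=> D hD hp; right; case: (memA D hD hp).
- have [hD1 hb1] := inA D1 (mem_head _ _).
  have hc : in_inflated D1 d (center D1).
    by rewrite /in_inflated /dist !subrr expr2 mulr0 addr0 sqrtr0 ltW // hr.
  exists (center D1); split.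
    apply/negP => /eqP hcp; move: hb1; rewrite /on_boundary -hcp /dist !subrr.
    rewrite expr2 mulr0 addr0 sqrtr0 => h; have := hr _ hD1; rewrite -h ltxx //.
  move=> D hD hp; case: (memA D hD hp) => [|]; last by right.
  by rewrite inE => /eqP ->; left.
- have [hD1 hb1] := inA D1 (mem_head _ _).
  have := inA D2; rewrite !inE eqxx !orbT => /(_ isT) [hD2 hb2].
  have n12 : D1 != D2 by move: uA; rewrite /= inE andbT.
  have [q [[hq1 hq2] nqp]] : exists q, (in_inflated D1 d q /\ in_inflated D2 d q) /\ q != p.
    apply: NNPP => hno; apply: ntp; exists D1, D2; split => // q; split.
      move=> h; apply: NNPP => nqp; apply: hno; exists q; split => //; exact/eqP.
    by move=> ->; split; rewrite /in_inflated le_eqVlt; apply/orP; left; apply/eqP.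
  exists q; split => // D hD hp; case: (memA D hD hp) => [|]; last by right.
  by rewrite !inE => /orP[] /eqP ->; left.
- exfalso; apply: ncb.
  have [hD1 hb1] := inA D1 (mem_head _ _).
  have := inA D2; rewrite !inE eqxx !orbT => /(_ isT) [hD2 hb2].
  have := inA D3; rewrite !inE eqxx !orbT => /(_ isT) [hD3 hb3].
  move: uA; rewrite /= !inE !negb_or => /and3P[/and3P[n12 n13 _] /andP[n23 _] _].
  by exists D1, D2, D3; split.
Qed.

End H.

Theorem lemma2 (R : realType) (Ds : seq (disk R)) (delta_star : R)
    (p1 p2 : point R) :
  Ds != [::] -> uniq Ds ->
  (forall D, D \in Ds -> 0 < radius D) ->
  (forall D1 D2, D1 \in Ds -> D2 \in Ds -> D1 != D2 -> ~ disk_contains D1 D2) ->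
  (* delta_star is the minimum delta >= 0 admitting a covering pair *)
  0 <= delta_star ->
  (exists q1 q2, covers Ds delta_star q1 q2) ->
  (forall delta, 0 <= delta -> (exists q1 q2, covers Ds delta q1 q2) ->
     delta_star <= delta) ->
  covers Ds delta_star p1 p2 ->
  delta_star = 0
  \/ (common_boundary3 Ds delta_star p1 \/ common_boundary3 Ds delta_star p2)
  \/ (tangent_point Ds delta_star p1 \/ tangent_point Ds delta_star p2).
Proof.
move=> _ uDs rpos _ d0 _ dmin cov.
case: (eqVneq delta_star 0) => [->|dn0]; first by left.
have dpos : 0 < delta_star by rewrite lt_neqAle eq_sym dn0 d0.
right.
case: (classic (common_boundary3 Ds delta_star p1 \/ common_boundary3 Ds delta_star p2)) => [h|h]; first by left.
right; apply: NNPP => h'.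
have [nc1 nc2] : ~ common_boundary3 Ds delta_star p1 /\ ~ common_boundary3 Ds delta_star p2.
  by split => hh; apply: h; [left|right].
have [nt1 nt2] : ~ tangent_point Ds delta_star p1 /\ ~ tangent_point Ds delta_star p2.
  by split => hh; apply: h'; [left|right].
have hr : forall D, D \in Ds -> 0 < radius D + delta_star.
  by move=> D hD; rewrite addr_gt0 // rpos.
have [q1 [nq1 hq1]] := @key R delta_star Ds p1 uDs hr nc1 nt1.
have [q2 [nq2 hq2]] := @key R delta_star Ds p2 uDs hr nc2 nt2.
set S1 := [seq D <- Ds | dist p1 (center D) <= radius D + delta_star].
set S2 := [seq D <- Ds | dist p2 (center D) <= radius D + delta_star].
have [||||e1 [/andP[e10 e1d] he1]] := @mid R delta_star delta_star p1 q1 S1.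
- by rewrite eq_sym.
- by move=> D; rewrite mem_filter => /andP[_ /hr].
- by move=> D; rewrite mem_filter => /andP[hp hD]; split => //; apply: hq1.
- exact: dpos.
have [||||e2 [/andP[e20 e2d] he2]] := @mid R delta_star e1 p2 q2 S2.
- by rewrite eq_sym.
- by move=> D; rewrite mem_filter => /andP[_ /hr].
- by move=> D; rewrite mem_filter => /andP[hp hD]; split => //; apply: hq2.
- exact: e10.
have : delta_star <= delta_star - e2.
  apply: dmin; first by rewrite subr_ge0 (le_trans e2d).
  exists (@lerp R p1 q1 2^-1), (@lerp R p2 q2 2^-1) => D hD.
  case: (cov D hD) => hp; [left | right].
    apply: mono (he1 D _) _; first by rewrite mem_filter hD andbT.
    by rewrite lerD2l lerN2.
  by apply: he2; rewrite mem_filter hD andbT.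
by move=> hh; have := e20; lra.
Qed.
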